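(* Let $k,n\ge1$, let $M=\Gamma(\mathbb Z\,\overrightarrow{\times}\,G,(k,0))$ with $G$ a Dedekind $\sigma$-complete $\ell$-group, let $x$ be an $n$-dimensional observable on $M$ and $F=F_x$. Let $i\in\{1,\ldots,k\}$, $\mathbf s\in T_i$, and $\mathbf t\in\mathbb R^n$ with $\pi_i(\mathbf s)\ll\mathbf t\le\mathbf s$. Then $\mathbf t\in T_i$ and $\mathbf t\approx_i\mathbf s$; moreover $\pi_i(\mathbf s)=\bigwedge\{\mathbf t\in\mathbb R^n\colon\pi_i(\mathbf s)\ll\mathbf t\le\mathbf s\}$ (componentwise infimum in $\mathbb R^n$), and the element $\bigwedge\{F(\mathbf t)\colon\pi_i(\mathbf s)\ll\mathbf t\le\mathbf s\}$ exists in $M$ and belongs to $M_i$.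
   Context: $\mathbb Z\,\overrightarrow{\times}\,G$ is $\mathbb Z\times G$ with lexicographic order; $\Gamma(K,v)=([0,v];\oplus,',0,v)$ with $a\oplus b=(a+b)\wedge v$, $a'=v-a$. Partial addition on $M$: $a+b$ defined iff the group sum is $\le(k,0)$. Summable sequence: every finite subfamily has a sum; its sum is the supremum of finite partial sums. An $n$-dimensional observable is $x:\mathcal B(\mathbb R^n)\to M$ with $x(\mathbb R^n)=1$ and $x(\bigcup A_m)=\sum_m x(A_m)$ (summable) for pairwise disjoint Borel $A_m$. $F_x(s_1,\ldots,s_n)=x((-\infty,s_1)\times\cdots\times(-\infty,s_n))$. $M_j=\{(j,g)\in M\}$, $T_j=\{\mathbf s\colon F(\mathbf s)\in M_j\}$. For $\mathbf s\in T_i$ ($i\ge1$), $\pi^i_j(\mathbf s)=\inf\{r\colon(s_1,\ldots,s_{j-1},r,s_{j+1},\ldots,s_n)\in T_i\}$, $\pi_i(\mathbf s)=(\pi^i_1(\mathbf s),\ldots,\pi^i_n(\mathbf s))$ (characteristic point associated to $\mathbf s$). For $\mathbf s,\mathbf t\in T_i$, $\mathbf s\approx_i\mathbf t$ iff $\pi_i(\mathbf s)=\pi_i(\mathbf t)$. $\mathbf a\le\mathbf b$ means $a_j\le b_j$ for all $j$; $\mathbf a\ll\mathbf b$ means $a_j<b_j$ for all $j$. *)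

(* Defs.v *)
From HB Require Import structures.
From mathcomp Require Import all_boot all_order all_algebra.
From mathcomp Require Import all_classical all_reals all_analysis.
Set Implicit Arguments. Unset Strict Implicit. Unset Printing Implicit Defensive.
Import Order.TTheory GRing.Theory Num.Theory.
Import numFieldNormedType.Exports.
Local Open Scope classical_set_scope.
Local Open Scope ring_scope.

Definition is_ub {T : Type} (le : T -> T -> Prop) (P : T -> Prop) (c : T) :=
  forall y, P y -> le y c.
Definition is_lb {T : Type} (le : T -> T -> Prop) (P : T -> Prop) (c : T) :=
  forall y, P y -> le c y.
Definition is_sup {T : Type} (le : T -> T -> Prop) (P : T -> Prop) (c : T) :=
  is_ub le P c /\ forall z, is_ub le P z -> le c z.
Definition is_inf {T : Type} (le : T -> T -> Prop) (P : T -> Prop) (c : T) :=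
  is_lb le P c /\ forall z, is_lb le P z -> le z c.

(** * Dedekind sigma-complete (abelian) l-groups: a Z-module G with an order
    relation [le] which is a translation-invariant lattice order, such that every
    nonempty countable subset (= range of a sequence) bounded above has a sup. *)
Definition dsc_lgroup (G : zmodType) (le : G -> G -> Prop) : Prop :=
  [/\ (forall a, le a a),
      (forall a b, le a b -> le b a -> a = b) /\
      (forall a b c, le a b -> le b c -> le a c),
      (forall a b c, le a b -> le (a + c) (b + c)),
      (forall a b, (exists c, is_sup le (fun y => y = a \/ y = b) c) /\
                   (exists c, is_inf le (fun y => y = a \/ y = b) c)) &
      (forall u : nat -> G, (exists b, forall m, le (u m) b) ->
         exists c, is_sup le (fun y => exists m, y = u m) c)].

Section Lex.
Variables (G : zmodType) (le : G -> G -> Prop) (k : nat).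

Definition lexle (a b : int * G) : Prop :=
  (a.1 < b.1)%R \/ (a.1 = b.1 /\ le a.2 b.2).

Definition padd (a b : int * G) : int * G := (a.1 + b.1, a.2 + b.2).

Definition unitM : int * G := ((k : int), 0).
Definition inM (a : int * G) : Prop := lexle (0, 0) a /\ lexle a unitM.

Definition Mj (j : int) (a : int * G) : Prop := inM a /\ a.1 = j.

Definition is_supM (P : int * G -> Prop) (c : int * G) : Prop :=
  [/\ inM c, (forall y, P y -> lexle y c) &
      forall z, inM z -> (forall y, P y -> lexle y z) -> lexle c z].
Definition is_infM (P : int * G -> Prop) (c : int * G) : Prop :=
  [/\ inM c, (forall y, P y -> lexle c y) &
      forall z, inM z -> (forall y, P y -> lexle z y) -> lexle z c].

Definition psum (s : seq nat) (u : nat -> int * G) : int * G :=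
  (\sum_(m <- s) (u m).1, \sum_(m <- s) (u m).2).

(** [u] (a sequence in M) is summable with sum [c]: every finite subfamily has a
    sum in M (i.e. its group sum is <= (k,0)), and [c] is the supremum in M of
    the finite partial sums. *)
Definition summable_to (u : nat -> int * G) (c : int * G) : Prop :=
  (forall s : seq nat, uniq s -> lexle (psum s u) unitM) /\
  is_supM (fun y => exists s : seq nat, uniq s /\ y = psum s u) c.
End Lex.

Section Obs.
Variables (R : realType) (n : nat).

Definition borel_n : set (set 'rV[R]_n) := <<s [set A : set 'rV[R]_n | open A] >>.

Variables (G : zmodType) (le : G -> G -> Prop) (k : nat).

Definition observable (x : set 'rV[R]_n -> int * G) : Prop :=
  [/\ (forall A, borel_n A -> inM le k (x A)),
      x setT = unitM G k &
      forall A : nat -> set 'rV[R]_n, (forall m, borel_n (A m)) ->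
        (forall m1 m2, m1 <> m2 -> A m1 `&` A m2 = set0) ->
        summable_to le k (fun m => x (A m)) (x (\bigcup_m A m))].

Variable x : set 'rV[R]_n -> int * G.

Definition Fx (s : 'rV[R]_n) : int * G :=
  x [set u | forall j, u ord0 j < s ord0 j].

Definition Tset (j : int) : set 'rV[R]_n := [set s | (Fx s).1 = j].

Definition pi_coord (i : int) (s : 'rV[R]_n) (j : 'I_n) : R :=
  inf [set r : R | Tset i (\row_l (if l == j then r else s ord0 l))].
Definition pi_pt (i : int) (s : 'rV[R]_n) : 'rV[R]_n :=
  \row_j pi_coord i s j.

Definition approx_i (i : int) (s t : 'rV[R]_n) : Prop :=
  [/\ Tset i s, Tset i t & pi_pt i s = pi_pt i t].
End Obs.

Definition vle (R : realType) n (a b : 'rV[R]_n) : Prop := forall j, a ord0 j <= b ord0 j.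
Definition vlt (R : realType) n (a b : 'rV[R]_n) : Prop := forall j, a ord0 j < b ord0 j.

(* Main.v *)
Require Import Defs.
From HB Require Import structures.
From mathcomp Require Import all_boot all_order all_algebra.
From mathcomp Require Import all_classical all_reals all_analysis.
Import Order.TTheory GRing.Theory Num.Theory.
Import numFieldNormedType.Exports.
Local Open Scope classical_set_scope.
Local Open Scope ring_scope.

Set Implicit Arguments. Unset Strict Implicit.
Section B.
Variables (R : realType) (n : nat).
Local Notation MT := (g_sigma_algebraType [set A : set 'rV[R]_n | open A]).
Lemma bU (A B : set 'rV[R]_n) : borel_n A -> borel_n B -> borel_n (A `|` B).
Proof. exact: (@measurableU _ MT). Qed.
Lemma bD (A B : set 'rV[R]_n) : borel_n A -> borel_n B -> borel_n (A `\` B).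
Proof. exact: (@measurableD _ MT). Qed.
Lemma b0 : borel_n (@set0 'rV[R]_n).
Proof. exact: (@measurable0 _ MT). Qed.
Lemma bcap (F : nat -> set 'rV[R]_n) : (forall m, borel_n (F m)) -> borel_n (\bigcap_m F m).
Proof. move=> h; exact: (@bigcapT_measurable _ MT). Qed.
Lemma bopen (A : set 'rV[R]_n) : open A -> borel_n A.
Proof. move=> h; exact: sub_sigma_algebra. Qed.
Definition box (s : 'rV[R]_n) : set 'rV[R]_n := [set u | forall j, u ord0 j < s ord0 j].
Lemma bbox (s : 'rV[R]_n) : borel_n (box s).
Proof.
set BB := \bigcap_m (if (m < n)%N =P true is ReflectT h then [set u : 'rV[R]_n | u ord0 (Ordinal h) < s ord0 (Ordinal h)] else setT).
suff <- : BB = box s.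
apply: bcap => m; case: eqP => h.
  apply: bopen; apply: (@open_comp _ _ (fun u : 'rV[R]_n => u ord0 (Ordinal h)) [set r | r < s ord0 (Ordinal h)]).
    move=> u _; exact: coord_continuous.
  exact: open_lt.
apply: bopen; exact: openT.
apply/seteqP; split=> u /=.
  move=> hu j; have := hu (val j) I; case: eqP => h /=; last by rewrite ltn_ord in h.
  by have -> : Ordinal h = j by apply: val_inj.
move=> hu m _; case: eqP => // h; exact: hu.
Qed.
Lemma Fx_box (G : zmodType) (x : set 'rV[R]_n -> int * G) s : Fx x s = x (box s).
Proof. by []. Qed.
End B.
Section Lexs.
Variables (G : zmodType) (le : G -> G -> Prop).
Hypothesis Hle : dsc_lgroup le.

Lemma le_refl' (a : G) : le a a. Proof. by case: Hle. Qed.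
Lemma le_anti' (a b : G) : le a b -> le b a -> a = b. Proof. by case: Hle => _ [h _] _ _ _; apply: h. Qed.
Lemma le_trans' (a b c : G) : le a b -> le b c -> le a c. Proof. by case: Hle => _ [_ h] _ _ _; apply: h. Qed.
Lemma le_add' (a b c : G) : le a b -> le (a + c) (b + c). Proof. by case: Hle => _ _ h _ _; apply: h. Qed.
Lemma le_addK' (a b c : G) : le (a + c) (b + c) -> le a b.
Proof. by move=> h; have := le_add' (- c) h; rewrite !addrK. Qed.

Implicit Types a b c : int * G.
Definition pneg (a : int * G) : int * G := (- a.1, - a.2).

Lemma lex_refl a : lexle le a a. Proof. by right; split => //; apply: le_refl'. Qed.
Lemma lex_trans a b c : lexle le a b -> lexle le b c -> lexle le a c.
Proof.
case=> [h1|[e1 h1]] [h2|[e2 h2]]; first by left; exact: lt_trans h2.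
- by left; rewrite -e2.
- by left; rewrite e1.
by right; split; [rewrite e1 | apply: le_trans' h2].
Qed.
Lemma lex_anti a b : lexle le a b -> lexle le b a -> a = b.
Proof.
case: a b => [a1 a2] [b1 b2]; rewrite /lexle /=.
case=> [h1|[e1 h1]] [h2|[e2 h2]].
- by move: (lt_trans h1 h2); rewrite ltxx.
- by move: h1; rewrite e2 ltxx.
- by move: h2; rewrite e1 ltxx.
by rewrite e1 (le_anti' h1 h2).
Qed.
Lemma lex_fst a b : lexle le a b -> (a.1 <= b.1)%R.
Proof. by case=> [/ltW|[-> _]]. Qed.
Lemma lex_add a b c : lexle le a b -> lexle le (padd a c) (padd b c).
Proof.
case=> [h|[e h]]; [left | right] => /=; first by rewrite ltrD2r.
by rewrite e; split => //; apply: le_add'.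
Qed.
Lemma paddK a c : padd (padd a c) (pneg c) = a.
Proof. by case: a c => a1 a2 [c1 c2]; rewrite /padd /pneg /= !addrK. Qed.
Lemma lex_addK a b c : lexle le (padd a c) (padd b c) -> lexle le a b.
Proof. by move=> h; have := lex_add (pneg c) h; rewrite !paddK. Qed.
Lemma padd0 a : padd a (0, 0) = a. Proof. by case: a => a1 a2; rewrite /padd /= !addr0. Qed.
Lemma add0p a : padd (0, 0) a = a. Proof. by case: a => a1 a2; rewrite /padd /= !add0r. Qed.
Lemma paddC a b : padd a b = padd b a. Proof. by rewrite /padd addrC [a.2 + _]addrC. Qed.
Lemma paddA a b c : padd a (padd b c) = padd (padd a b) c. Proof. by rewrite /padd /= !addrA. Qed.
Lemma lex_addl a b : lexle le (0, 0) b -> lexle le a (padd a b).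
Proof. by move=> h; have := lex_add a h; rewrite add0p paddC. Qed.
End Lexs.

Lemma sum01 (V : zmodType) (f : nat -> V) (s : seq nat) :
  (forall m, (1 < m)%N -> f m = 0) -> uniq s ->
  \sum_(m <- s) f m = f 0%N *+ (0%N \in s) + f 1%N *+ (1%N \in s).
Proof.
move=> f0; elim: s => [|m s IH]; first by rewrite big_nil !in_nil !mulr0n addr0.
rewrite /= big_cons !in_cons => /andP[ms us]; rewrite IH //.
case: m ms => [|[|m]] ms /=.
- by rewrite (negbTE ms) mulr0n add0r mulr1n.
- by rewrite (negbTE ms) mulr0n addr0 mulr1n addrC.
by rewrite f0 // add0r.
Qed.


Lemma lex_triv (G : zmodType) (le : G -> G -> Prop) (Hle : dsc_lgroup le) (a b : int * G) :
  (forall e : G, e = 0) -> (a.1 <= b.1)%R -> lexle le a b.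
Proof.
move=> triv; rewrite le_eqVlt => /orP[/eqP e|h]; last by left.
by right; split => //; rewrite (triv a.2) (triv b.2); apply: le_refl'.
Qed.

Lemma Lsup (G : zmodType) (le : G -> G -> Prop) (Hle : dsc_lgroup le) k P (a : int * G) (d : int) :
  is_supM le k P a -> (forall y, P y -> (y.1 <= d)%R) -> (0 <= d)%R -> (a.1 <= d)%R.
Proof.
move=> [[a0 ak] hub hl] hP d0; rewrite leNgt; apply/negP => da.
have step1 : forall f : G, le 0 f -> f = 0.
  move=> f f0.
  have hz : lexle le a (a.1, a.2 - f).
    apply: hl.
    - split; first by left => /=; exact: le_lt_trans d0 da.
      case: ak => [h|[e h]]; first by left.
      right; split => //=.
      have h0 : le a.2 0 := h.
      have := @le_trans' G le Hle (a.2 - f) a.2 0; apply => //.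
      by have := le_add' Hle (a.2 - f) f0; rewrite add0r (addrC f) subrK.
    - move=> y /hP yd; left => /=; exact: le_lt_trans yd da.
  case: hz => [|[_ h]]; first by rewrite ltxx.
  apply: (le_anti' Hle) f0.
  have := le_add' Hle (f - a.2) h; rewrite /=. 
  rewrite (addrC f) addrA subrr add0r.
  by rewrite addrACA subrr add0r addNr.
have triv : forall e : G, e = 0.
  move=> e; case: (Hle) => _ _ _ /(_ e 0) [_ [m [mlb mgl]]] _.
  have m0 : m = 0.
    have hm : le m 0 by apply: mlb; right.
    have := le_add' Hle (- m) hm; rewrite subrr add0r => /step1 /eqP.
    by rewrite oppr_eq0 => /eqP.
  have e0 : le 0 e by rewrite -m0; apply: mlb; left.
  have : le 0 (- e).
    have e1 : le e 0.
      have := step1 _ e0; move=> ->; exact: le_refl'.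
    by have := le_add' Hle (- e) e1; rewrite subrr add0r.
  by move=> /step1 /eqP; rewrite oppr_eq0 => /eqP.
have : lexle le a (d, 0).
  apply: hl.
  - split; first by apply: lex_triv.
    by apply: lex_triv => //=; exact: le_trans (ltW da) (lex_fst ak).
  - by move=> y /hP yd; apply: lex_triv.
by move=> /lex_fst; rewrite leNgt da.
Qed.

Section RealL.
Variable R : realType.

Lemma minl (q b : R) : Num.min q b <= q. Proof. by rewrite ge_min lexx. Qed.
Lemma minr (q b : R) : Num.min q b <= b. Proof. by rewrite ge_min lexx orbT. Qed.

Lemma H1 (p b q : R) : p < b -> (forall r, p < r <= b -> q <= r) -> q <= p.
Proof.
move=> pb h; rewrite leNgt; apply/negP => pq.
pose r := (p + Num.min q b) / 2.
have mq : p < Num.min q b by rewrite lt_min pq pb.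
have h1 : p < r by rewrite /r ltr_pdivlMr // mulrDr mulr1 ltrD2l.
have h2 : r < Num.min q b by rewrite /r ltr_pdivrMr // mulrDr mulr1 ltrD2r.
have := h r; rewrite h1 /= (ltW (lt_le_trans h2 (minr _ _))) => /(_ isT).
by rewrite leNgt (lt_le_trans h2 (minl _ _)).
Qed.

Lemma inf_trunc (A : set R) (c : R) : (exists2 a, A a & a <= c) ->
  inf A = inf (A `&` [set r | r <= c]).
Proof.
move=> [a Aa ac].
have ne' : (A `&` [set r | r <= c]) !=set0 by exists a.
have [lbA|nlbA] := pselect (has_lbound A).
  have lbA' : has_lbound (A `&` [set r | r <= c]).
    by case: lbA => l hl; exists l => y [Ay _]; apply: hl.
  apply/eqP; rewrite eq_le; apply/andP; split.
    by apply: lb_le_inf => // y [Ay _]; apply: (ge_inf lbA).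
  apply: lb_le_inf; first by exists a.
  move=> y Ay; have [yc|cy] := leP y c.
    by apply: (ge_inf lbA'); split.
  apply: (le_trans _ (ltW cy)); apply: (le_trans _ ac); apply: (ge_inf lbA'); by split.
rewrite !inf_out //.
  by move=> [_ h]; apply: nlbA; case: h => l hl; exists (Num.min l c) => y Ay;
    have [yc|cy] := leP y c; [rewrite ge_min hl //; split | rewrite ge_min (ltW cy) orbT].
by move=> [_ h]; apply: nlbA.
Qed.

Lemma archi_le (u p : R) : (forall m : nat, u < p + (m.+1%:R)^-1) -> u <= p.
Proof.
move=> h; rewrite leNgt; apply/negP => pu.
have [m hm] := ltr_add_invr pu.
by have := h m; rewrite ltNge (ltW hm).
Qed.
End RealL.
Section Meas.
Variables (R : realType) (n : nat) (G : zmodType) (le : G -> G -> Prop) (k : nat)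
  (x : set 'rV[R]_n -> int * G).
Hypotheses (Hle : dsc_lgroup le) (Hx : observable le k x).

Lemma xM A : borel_n A -> inM le k (x A).
Proof. by case: Hx => h _ _; apply: h. Qed.

Lemma x0 : x set0 = (0, 0).
Proof.
case: Hx => _ _ H.
have := H (fun _ => set0) (fun _ => @b0 R n) (fun _ _ _ => setI0 _).
have -> : \bigcup_m (fun _ : nat => @set0 'rV[R]_n) m = set0.
  by apply/seteqP; split => u //= [].
case=> _ [hM hub _].
have := hub (psum [:: 0%N; 1%N] (fun _ => x set0)) (ex_intro _ [:: 0%N; 1%N] (conj erefl erefl)).
rewrite /psum !big_cons !big_nil /= !addr0 => h.
have h2 : lexle le (padd (x set0) (x set0)) (padd (0, 0) (x set0)).
  by rewrite add0p.
have := lex_addK Hle h2 => h3.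
by apply: (lex_anti Hle h3); case: hM.
Qed.

Lemma xU A B : borel_n A -> borel_n B -> A `&` B = set0 ->
  x (A `|` B) = padd (x A) (x B).
Proof.
move=> bA bB AB.
pose f (m : nat) := if m == 0%N then A else if m == 1%N then B else set0.
case: Hx => _ _ H.
have bf : forall m, borel_n (f m).
  by move=> [|[|m]] //=; apply: b0.
have df : forall m1 m2, m1 <> m2 -> f m1 `&` f m2 = set0.
  move=> [|[|m1]] [|[|m2]] //= _; rewrite ?setI0 ?set0I //; by rewrite setIC.
have := H f bf df.
have -> : \bigcup_m f m = A `|` B.
  apply/seteqP; split => u /=.
    by move=> [[|[|m]] _ /= fu]; [left|right|].
  by case=> hu; [exists 0%N | exists 1%N].
case=> hfin [hM hub hleast].
have e01 : psum [:: 0%N; 1%N] (fun m => x (f m)) = padd (x A) (x B).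
  by rewrite /psum !big_cons !big_nil /= !addr0 /f /=.
have h1 := hub _ (ex_intro _ [:: 0%N; 1%N] (conj erefl (esym e01))).
have hA : lexle le (0, 0) (x A) by case: (xM bA).
have hB : lexle le (0, 0) (x B) by case: (xM bB).
apply: (lex_anti Hle) h1; apply: hleast.
  split; last by have := hfin [:: 0%N; 1%N] erefl; rewrite e01.
  exact (lex_trans Hle hA (lex_addl Hle (x A) hB)).
move=> y [s [us ->]].
have fz : forall m, (1 < m)%N -> x (f m) = (0, 0).
  by move=> [|[|m]] //= _; rewrite x0.
have -> : psum s (fun m => x (f m)) =
   ((x A).1 *+ (0%N \in s) + (x B).1 *+ (1%N \in s),
    (x A).2 *+ (0%N \in s) + (x B).2 *+ (1%N \in s)).
  rewrite /psum (@sum01 _ (fun m => (x (f m)).1)) ?(@sum01 _ (fun m => (x (f m)).2)) //.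
    by move=> m /fz ->.
  by move=> m /fz ->.
case: (0%N \in s); case: (1%N \in s); rewrite ?mulr1n ?mulr0n ?addr0 ?add0r.
- exact: lex_refl.
- by case: (x A) (lex_addl Hle (x A) hB).
- by rewrite paddC; case: (x B) (lex_addl Hle (x B) hA).
exact (lex_trans Hle hA (lex_addl Hle (x A) hB)).
Qed.

Lemma xdiff A B : borel_n A -> borel_n B -> A `<=` B -> x B = padd (x A) (x (B `\` A)).
Proof. by move=> bA bB AB; rewrite -{1}(setDUK AB) xU //; [exact: bD | exact: setDIK]. Qed.

Lemma xmono A B : borel_n A -> borel_n B -> A `<=` B -> lexle le (x A) (x B).
Proof.
move=> bA bB AB; rewrite (xdiff bA bB AB); apply: lex_addl => //.
by case: (xM (bD bB bA)).
Qed.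

Lemma xge0 A : borel_n A -> (0 <= (x A).1)%R.
Proof. by move=> /xM [/lex_fst]. Qed.

Section Dec.
Variable D : nat -> set 'rV[R]_n.
Hypotheses (bDm : forall m, borel_n (D m)) (hdec : forall m, D m.+1 `<=` D m)
  (hcap : forall u, exists m, ~ D m u).

Lemma dec_le m m' : (m <= m')%N -> D m' `<=` D m.
Proof.
elim: m' => [|m' IH]; first by rewrite leqn0 => /eqP ->.
rewrite leq_eqVlt => /orP[/eqP -> //|]; rewrite ltnS => /IH h.
by move=> u /hdec /h.
Qed.

Let E m := D m `\` D m.+1.

Lemma bE m : borel_n (E m). Proof. exact: bD. Qed.

Lemma E_disj m1 m2 : m1 <> m2 -> E m1 `&` E m2 = set0.
Proof.
wlog lt12 : m1 m2 / (m1 < m2)%N.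
  move=> W ne; case: (ltngtP m1 m2) => h; first exact: W.
  - by rewrite setIC; apply: W => // e; apply: ne.
  - by move: ne; rewrite h.
move=> _; apply/seteqP; split => u // [[_ h1] [h2 _]].
by apply: h1; apply: (dec_le lt12).
Qed.

Lemma E_cup : \bigcup_m E m = D 0.
Proof.
apply/seteqP; split => u.
  by move=> [m _ [h _]]; apply: (dec_le (leq0n m)).
move=> u0; have [m hm] := hcap u.
suff : exists m', E m' u by move=> [m' h]; exists m'.
elim: m hm => [|m IH] hm; first by [].
have [um|um] := pselect (D m u); first by exists m.
exact: IH.
Qed.

Lemma sumE : summable_to le k (fun m => x (E m)) (x (D 0)).
Proof. by case: Hx => _ _ H; rewrite -E_cup; apply: H; [exact: bE | exact: E_disj]. Qed.

Lemma psumE s : uniq s ->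
  borel_n [set u | exists2 m, m \in s & E m u] /\
  psum s (fun m => x (E m)) = x [set u | exists2 m, m \in s & E m u].
Proof.
elim: s => [|m s IH].
  have -> : [set u : 'rV[R]_n | exists2 m, m \in [::] & E m u] = set0.
    by apply/seteqP; split => u // [].
  by split; [exact: b0 | rewrite x0 /psum !big_nil].
rewrite /= => /andP[ms /IH [bs es]].
have -> : [set u | exists2 m0, m0 \in m :: s & E m0 u] =
   E m `|` [set u | exists2 m, m \in s & E m u].
  apply/seteqP; split => u.
    move=> [m0]; rewrite in_cons => /orP[/eqP -> h|h1 h2]; first by left.
    by right; exists m0.
  case=> [h|[m0 h1 h2]]; first by exists m; rewrite ?mem_head.
  by exists m0; rewrite // in_cons h1 orbT.
split; first exact: bU (bE m) bs.
rewrite xU //. all: try exact: bE.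
- by rewrite -es /psum !big_cons.
apply/seteqP; split => u // [h [m0 h1 h2]].
have : m0 <> m by move=> e; move: ms; rewrite -e h1.
by move=> /E_disj /seteqP [+ _] => /(_ u) H; apply: H.
Qed.

Lemma psum_bound s : uniq s -> exists M,
  lexle le (padd (psum s (fun m => x (E m))) (x (D M))) (x (D 0)).
Proof.
move=> us; have [bs es] := psumE us.
have [M hM] : exists M, forall m, m \in s -> (m < M)%N.
  elim: (s) => [|m s' [M hM]]; first by exists 0%N.
  exists (maxn M m.+1) => m0; rewrite in_cons => /orP[/eqP ->|/hM h].
    by rewrite leq_max leqnn orbT.
  by rewrite leq_max h.
exists M; rewrite es -xU //.
- apply: xmono; [exact: bU | exact: bDm | ].
  move=> u [[m0 _ [h _]]|h]; first exact: (dec_le (leq0n m0)).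
  exact: (dec_le (leq0n M)).
apply/seteqP; split => u // [[m0 h1 [_ h2]] h3].
by apply: h2; apply: (dec_le (hM _ h1)).
Qed.

Lemma C1 : exists N, (x (D N)).1 = 0.
Proof.
apply: contrapT => hN.
have pos : forall m, (1 <= (x (D m)).1)%R.
  move=> m; have := xge0 (bDm m); rewrite le_eqVlt => /orP[/eqP e|//].
  by exfalso; apply: hN; exists m.
have [_ hsup] := sumE.
have := Lsup Hle hsup.
move=> /(_ ((x (D 0)).1 - 1)) H.
have : ((x (D 0)).1 <= (x (D 0)).1 - 1)%R.
  apply: H; last by rewrite subr_ge0.
  move=> y [s [us ->]]; have [M hM] := psum_bound us.
  have := lex_fst hM; rewrite /= => h.
  rewrite lerBrDr; apply: le_trans h; exact: lerD.
by rewrite lerBrDr -[X in (_ <= X)%R]addr0 lerD2l.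
Qed.
End Dec.

Lemma C2 (D : nat -> set 'rV[R]_n) : (forall m, borel_n (D m)) ->
  (forall m, D m.+1 `<=` D m) -> (forall u, exists m, ~ D m u) -> (0 < k)%N ->
  forall w, (forall m, lexle le w (x (D m))) -> lexle le w (0, 0).
Proof.
move=> bDm hdec hcap k0 w hw.
have [N hN] := C1 bDm hdec hcap.
case: (ltP w.1 0) => w1; first by left.
have w10 : w.1 = 0.
  by apply/eqP; rewrite eq_le w1 -hN andbT; apply: lex_fst (hw N).
pose D' m := D (N + m)%N.
have bD' : forall m, borel_n (D' m) by move=> m; apply: bDm.
have hdec' : forall m, D' m.+1 `<=` D' m by move=> m; rewrite /D' addnS; apply: hdec.
have hcap' : forall u, exists m, ~ D' m u.
  move=> u; have [m hm] := hcap u; exists m => h; apply: hm.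
  by apply: (dec_le hdec (leq_addl N m)).
have [_ [_ _ hleast]] := sumE bD' hdec' hcap'.
have D'0 : D' 0%N = D N by rewrite /D' addn0.
rewrite D'0 in hleast.
set h := (x (D N)).2.
have wh : le w.2 h.
  by case: (hw N) => [|[_ //]]; rewrite w10 hN ltxx.
have := hleast (0, h - w.2).
case.
- split; last by left => /=; rewrite ltz_nat.
  right; split => //=.
  by have := le_add' Hle (- w.2) wh; rewrite subrr.
- move=> y [s [us ->]].
  have [M hM] := psum_bound bD' hdec' us.
  rewrite D'0 in hM.
  apply: (@lex_addK _ _ Hle _ _ w).
  have -> : padd (0, h - w.2) w = x (D N).
    by rewrite /padd /= w10 subrK addr0 -hN /h; symmetry; apply: surjective_pairing.
  refine (lex_trans Hle _ hM).
  rewrite paddC [padd _ (x _)]paddC; apply: lex_add => //.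
  exact: hw.
- by rewrite hN ltxx.
move=> [_ /= hh]; right; split => //=.
have := le_add' Hle (w.2 - h) hh.
by rewrite (addrC h) subrK addrA subrK subrr.
Qed.

Definition upd (v : 'rV[R]_n) (l : 'I_n) (r : R) : 'rV[R]_n :=
  \row_l' (if l' == l then r else v ord0 l').

Lemma Fmono v w : vle v w -> lexle le (Fx x v) (Fx x w).
Proof.
move=> h; apply: xmono; [exact: bbox|exact: bbox|].
by move=> u hu j; exact: lt_le_trans (hu j) (h j).
Qed.

Lemma Fmono1 v w : vle v w -> ((Fx x v).1 <= (Fx x w).1)%R.
Proof. by move=> /Fmono /lex_fst. Qed.

Lemma Fdiff v w : vle v w -> (Fx x w).1 = ((Fx x v).1 + (x (box w `\` box v)).1)%R.
Proof.
move=> h; rewrite !Fx_box (xdiff (bbox v) (bbox w)) //.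
by move=> u hu j; exact: lt_le_trans (hu j) (h j).
Qed.

Lemma key (i : int) (s v : 'rV[R]_n) : (Fx x s).1 = i -> vle v s ->
  (forall l, exists2 r, (Fx x (upd s l r)).1 = i & r <= v ord0 l) -> (Fx x v).1 = i.
Proof.
move=> hs vs hw.
pose u (kk : nat) : 'rV[R]_n := \row_l (if (l < kk)%N then v ord0 l else s ord0 l).
have us : forall kk, vle (u kk) s.
  by move=> kk l; rewrite mxE; case: ifP => // _; exact: (vs _).
have uS : forall kk, vle (u kk.+1) (u kk).
  move=> kk l; rewrite !mxE; case: (ltnP l kk) => h.
    by rewrite (leq_trans h (leqnSn _)).
  by case: ifP => // _; exact: (vs _).
have ge : forall kk, (Fx x (u kk)).1 = i.
  elim=> [|kk IH].
    suff -> : u 0%N = s by [].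
    by apply/rowP => l; rewrite !mxE ltn0.
  case: (ltnP kk n) => hk; last first.
    suff -> : u kk.+1 = u kk by [].
    apply/rowP => l; rewrite !mxE.
    have l1 : (l < kk)%N by apply: leq_trans (ltn_ord l) hk.
    by rewrite l1 (leq_trans l1 (leqnSn _)).
  pose j := Ordinal hk.
  have hj : (Fx x (upd s j (v ord0 j))).1 = i.
    have [r hr rv] := hw j.
    apply/eqP; rewrite eq_le; apply/andP; split.
      rewrite -hs; apply: Fmono1 => l; rewrite !mxE.
      by case: eqP => [->|_] //; exact: (vs _).
    rewrite -{1}hr; apply: Fmono1 => l; rewrite !mxE.
    by case: eqP => _ //; rewrite ?lexx.
  have d2 := Fdiff (us kk.+1).
  have d1 := Fdiff (uS kk).
  have e2 : (Fx x s).1 = ((Fx x (upd s j (v ord0 j))).1 +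
     (x (box s `\` box (upd s j (v ord0 j)))).1)%R.
    by apply: Fdiff => l; rewrite !mxE; case: eqP => [->|] //; exact: (vs _).
  have d2z : (x (box s `\` box (upd s j (v ord0 j)))).1 = 0.
    by move: e2; rewrite hs hj => /(congr1 (fun z => z - i)) /=; rewrite subrr (addrC i) addrK.
  have dle : ((x (box (u kk) `\` box (u kk.+1))).1 <= 0)%R.
    rewrite -d2z; apply: lex_fst; apply: xmono; try (apply: bD; apply: bbox).
    move=> u0 [h1 h2]; split.
      by move=> l; apply: lt_le_trans (h1 l) (us kk l).
    move=> h3; apply: h2 => l; have := h1 l; have := h3 l; rewrite !mxE.
    case: eqP => [->|/eqP ne].
      by rewrite /= ltnSn => h _.
    case: ifP => lk; first by rewrite (leq_trans lk (leqnSn _)).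
    rewrite ltnS leq_eqVlt lk orbF.
    suff -> : (nat_of_ord l == kk) = false by [].
    apply/negP => /eqP e; move/eqP: ne; apply; by apply: val_inj.
  apply/eqP; rewrite eq_le; apply/andP; split.
    by rewrite -hs; apply: Fmono1.
  by move: IH; rewrite d1 => <-; rewrite gerDl.
suff -> : v = u n by [].
by apply/rowP => l; rewrite mxE ltn_ord.
Qed.
End Meas.

Lemma paddNK (G : zmodType) (a c : int * G) : padd (padd a (pneg c)) c = a.
Proof. by case: a c => a1 a2 [c1 c2]; rewrite /padd /pneg /= !subrK. Qed.

Unset Implicit Arguments. Set Strict Implicit.

Theorem lemma4p2 (R : realType) (G : zmodType) (le : G -> G -> Prop) (k n : nat)
  (x : set 'rV[R]_n -> int * G) (i : nat) (s t : 'rV[R]_n) :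
  (1 <= k)%N -> (1 <= n)%N -> dsc_lgroup le -> observable le k x ->
  (1 <= i <= k)%N -> Tset x i s ->
  vlt (pi_pt x i s) t -> vle t s ->
  [/\ Tset x i t, approx_i x i t s,
      (forall j : 'I_n, pi_pt x i s ord0 j =
         inf [set t' ord0 j | t' in [set t' | vlt (pi_pt x i s) t' /\ vle t' s]]) &
      exists a : int * G,
        is_infM le k [set Fx x t' | t' in [set t' | vlt (pi_pt x i s) t' /\ vle t' s]] a
        /\ Mj le k i a].
Proof.
move=> k1 n1 Hle Hx /andP[i1 ik] hs hpt hts.
set p := pi_pt x i s.
have pE : forall j, p ord0 j = inf [set r | Tset x i (upd s j r)].
  by move=> j; rewrite /p /pi_pt mxE.
have updK : forall (v : 'rV[R]_n) (j : 'I_n), upd v j (v ord0 j) = v.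
  by move=> v j; apply/rowP => l; rewrite mxE; case: eqP => [->|].
have W : forall l c, p ord0 l < c -> exists2 r, Tset x i (upd s l r) & r < c.
  move=> l c hc; apply: contrapT => hn.
  have : c <= p ord0 l.
    rewrite pE; apply: lb_le_inf; first by exists (s ord0 l); rewrite /= updK.
    move=> r hr; rewrite leNgt; apply/negP => rc; apply: hn; by exists r.
  by rewrite leNgt hc.
have Keyp : forall v, vlt p v -> vle v s -> Tset x i v.
  move=> v pv vs; apply: (key Hle Hx hs vs) => l.
  have [r hr rc] := W l _ (pv l); exists r => //; exact: ltW.
have ht := Keyp t hpt hts.
split => //.
- split => //; apply/rowP => j; rewrite !mxE /pi_coord.
  have [r0 hr0 r0t] := W j _ (hpt j).
  rewrite (@inf_trunc _ _ (t ord0 j)); last first.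
    by exists (t ord0 j) => //; change (Tset x i (upd t j (t ord0 j))); rewrite updK.
  rewrite [in RHS](@inf_trunc _ _ (t ord0 j)); last first.
    by exists r0 => //; exact: ltW.
  congr inf; apply/seteqP; split => r [hr rt]; split => //.
  + rewrite /Tset /=; apply/eqP; rewrite eq_le; apply/andP; split.
      rewrite -hs; apply: (Fmono1 Hle Hx) => l; rewrite !mxE.
      by case: eqP => [->|_] //; exact: le_trans rt (hts j).
    rewrite -{1}hr; apply: (Fmono1 Hle Hx) => l; rewrite !mxE.
    by case: eqP => _ //; exact: (hts l).
  + apply: (key Hle Hx hs).
      move=> l; rewrite !mxE; case: eqP => [->|_] //; first exact: le_trans rt (hts j).
    move=> l; case: (eqVneq l j) => [->|ne].
      by exists r; rewrite // mxE eqxx.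
    have [r' hr' r't] := W l _ (hpt l).
    by exists r' => //; rewrite mxE (negbTE ne); exact: ltW.
- move=> j; apply/eqP; rewrite eq_le; apply/andP; split.
    apply: lb_le_inf; first by exists (t ord0 j); exists t.
    by move=> _ [t' [pt' _] <-]; exact: ltW (pt' j).
  have lbI : has_lbound [set t' ord0 j | t' in [set t' | vlt p t' /\ vle t' s]].
    by exists (p ord0 j) => _ [t' [pt' _] <-]; exact: ltW (pt' j).
  apply: (H1 (lt_le_trans (hpt j) (hts j))) => r /andP[pr rs].
  apply: (ge_inf lbI); exists (upd s j r); last by rewrite mxE eqxx.
  split => l; rewrite /upd mxE; case: eqP => [->|_] //.
  exact: lt_le_trans (hpt l) (hts l).
pose tm (m : nat) : 'rV[R]_n := \row_l Num.min (t ord0 l) (p ord0 l + (m.+1%:R)^-1).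
have tm_in : forall m, vlt p (tm m) /\ vle (tm m) s.
  move=> m; split => l.
    by rewrite [X in _ < X]mxE lt_min hpt /= ltrDl invr_gt0 ltr0Sn.
  rewrite mxE; exact: le_trans (minl _ _) (hts l).
have tm_dec : forall m, vle (tm m.+1) (tm m).
  move=> m l; rewrite !mxE; apply: le_min2 => //; rewrite lerD2l lef_pV2 ?ler_nat //.
  by rewrite posrE ltr0Sn.
  by rewrite posrE ltr0Sn.
pose B := \bigcap_m box (tm m).
pose D m := box (tm m) `\` B.
have bB : borel_n B by apply: bcap => m; exact: bbox.
have bDm : forall m, borel_n (D m) by move=> m; apply: bD => //; exact: bbox.
have hdec : forall m, D m.+1 `<=` D m.
  by move=> m u [h1 h2]; split => // l; exact: lt_le_trans (h1 l) (tm_dec m l).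
have hcap : forall u, exists m, ~ D m u.
  move=> u; have [Bu|nBu] := pselect (B u); first by exists 0%N; case.
  have [m hm] : exists m, ~ box (tm m) u.
    apply: contrapT => hh; apply: nBu => m _; apply: contrapT => hm; apply: hh; by exists m.
  by exists m; case.
have xtm : forall m, Fx x (tm m) = padd (x B) (x (D m)).
  move=> m; rewrite Fx_box; apply: (xdiff Hle Hx) => //; first exact: bbox.
  by move=> u hu; apply: hu.
have k0 : (0 < k)%N by [].
exists (x B); split; last first.
  split; first exact: (xM Hx bB).
  have [N hN] := C1 Hle Hx bDm hdec hcap.
  have := Keyp (tm N) (tm_in N).1 (tm_in N).2.
  move=> h; have h' : (Fx x (tm N)).1 = i := h.
  by rewrite -h' xtm /= hN addr0.
split; first exact: (xM Hx bB).
- move=> _ [t' [pt' t's] <-]; rewrite Fx_box; apply: (xmono Hle Hx bB (bbox _)).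
  move=> u Bu l.
  have hu : u ord0 l <= p ord0 l.
    apply: archi_le => m; have := Bu m I l; rewrite mxE => h.
    exact: lt_le_trans h (minr _ _).
  exact: le_lt_trans hu (pt' l).
move=> z zM hz.
have hzm : forall m, lexle le (padd z (pneg (x B))) (x (D m)).
  move=> m; have := hz (Fx x (tm m)) (ex_intro2 _ _ (tm m) (tm_in m) erefl).
  rewrite xtm => h; have := lex_add Hle (pneg (x B)) h.
  by rewrite [padd (x B) _]paddC paddK.
have h := C2 Hle Hx bDm hdec hcap k0 hzm.
by have := lex_add Hle (x B) h; rewrite add0p paddNK.
Qed.
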